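(* Let $\mathcal H$ be the $5$-uniform hypergraph defined below, let $e,f$ be two edges of $\mathcal{H}$, and let $\phi : V(\mathcal{H}_{ef}) \to V(\mathcal{H})$ be a monomorphism. If $\phi(e') = e'$ for every edge $e' \in \mathcal{H}_{ef}$, then $\phi$ is the identity.
   Context: $\mathcal{H}$ has vertex set $\{z, v_1,\dots,v_9\}$ and edges $r=\{z,v_1,v_3,v_5,v_8\}$, $g=\{z,v_2,v_4,v_7,v_9\}$, $a=\{v_1,v_4,v_6,v_8,v_9\}$, $b=\{v_9,v_1,v_2,v_3,v_4\}$, and $e_i=\{v_i,v_{i+1},v_{i+2},v_{i+3},v_{i+4}\}$ for $i=1,\dots,5$. $\mathcal{H}_{ef}$ is the hypergraph with edge set $E(\mathcal H)\setminus\{e,f\}$, and $V(\mathcal H_{ef})$ is the union of its edges. A monomorphism $\phi: V(\mathcal{H}_{ef})\to V(\mathcal{H})$ is an injective map such that $\phi(x):=\{\phi(y): y\in x\}$ is an edge of $\mathcal H$ for every edge $x$ of $\mathcal H_{ef}$; ''identity'' means $\phi(y)=y$ for all $y\in V(\mathcal H_{ef})$. *)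

(* Defs.v *)
From mathcomp Require Import all_boot.
Set Implicit Arguments. Unset Strict Implicit. Unset Printing Implicit Defensive.

(* Vertices of H: 'I_10, with z = 0 and v_i = i (1 <= i <= 9). *)
Definition Vtx := 'I_10.
Definition vx (i : nat) : Vtx := inord i.
Definition z : Vtx := vx 0.

Definition edge_of (s : seq nat) : {set Vtx} := [set x in map vx s].

Definition r_edge : {set Vtx} := z |: edge_of [:: 1; 3; 5; 8].
Definition g_edge : {set Vtx} := z |: edge_of [:: 2; 4; 7; 9].
Definition a_edge : {set Vtx} := edge_of [:: 1; 4; 6; 8; 9].
Definition b_edge : {set Vtx} := edge_of [:: 9; 1; 2; 3; 4].
Definition e_edge (i : nat) : {set Vtx} := edge_of [:: i; i+1; i+2; i+3; i+4].

Definition EH : {set {set Vtx}} :=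
  [set r_edge; g_edge; a_edge; b_edge;
       e_edge 1; e_edge 2; e_edge 3; e_edge 4; e_edge 5].

Definition E_ef (e f : {set Vtx}) : {set {set Vtx}} := EH :\: [set e; f].

Definition V_ef (e f : {set Vtx}) : {set Vtx} := \bigcup_(x in E_ef e f) x.

(* phi : V(H_ef) -> V(H) is a monomorphism (only values on V(H_ef) matter) *)
Definition monomorphism (e f : {set Vtx}) (phi : Vtx -> Vtx) : Prop :=
  {in V_ef e f &, injective phi} /\
  (forall x, x \in E_ef e f -> phi @: x \in EH).

(* Main.v *)
Require Import Defs.
From mathcomp Require Import all_boot.

Definition EL : seq {set Vtx} :=
  [:: r_edge; g_edge; a_edge; b_edge;
       e_edge 1; e_edge 2; e_edge 3; e_edge 4; e_edge 5].
Definition EN : seq (seq nat) :=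
  [:: [:: 0;1;3;5;8]; [:: 0;2;4;7;9]; [:: 1;4;6;8;9]; [:: 9;1;2;3;4];
      [:: 1;2;3;4;5]; [:: 2;3;4;5;6]; [:: 3;4;5;6;7]; [:: 4;5;6;7;8]; [:: 5;6;7;8;9]].

Lemma eq_vx (y : Vtx) n : n < 10 -> (y == vx n) = (val y == n).
Proof. by move=> Hn; rewrite /vx -(inj_eq val_inj) /= inordK. Qed.

Lemma edge_ofE (y : Vtx) s : all (fun n => n < 10) s -> (y \in edge_of s) = (val y \in s).
Proof.
rewrite /edge_of inE; elim: s => [//|a s IH] /= /andP [Ha Hs].
by rewrite !in_cons eq_vx // IH.
Qed.

Lemma memEL k (y : Vtx) : k < 9 -> (y \in nth set0 EL k) = (val y \in nth [::] EN k).
Proof.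
do 9 (case: k => [_|k]; first by
  rewrite /= /r_edge /g_edge /a_edge /b_edge /e_edge ?in_setU1 ?edge_ofE
   // /z ?eq_vx).
by [].
Qed.

Lemma EL_EH k : k < 9 -> nth set0 EL k \in EH.
Proof.
do 9 (case: k => [_|k]; first by rewrite /= /EH !inE eqxx ?orbT).
by [].
Qed.

Lemma EH_ex x : x \in EH -> exists2 k, k < 9 & x = nth set0 EL k.
Proof.
move=> H; have Hx : x \in EL.
  by move: H; rewrite /EH /EL !inE -!orbA.
by exists (index x EL); [rewrite -[9]/(size EL) index_mem | rewrite nth_index].
Qed.

Lemma distinct_check : all (fun i => all (fun k => (i != k) ==>
   has (fun y => (y \in nth [::] EN i) != (y \in nth [::] EN k)) (iota 0 10))
   (iota 0 9)) (iota 0 9).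
Proof. by []. Qed.

Lemma EL_inj i k : i < 9 -> k < 9 -> nth set0 EL i = nth set0 EL k -> i = k.
Proof.
move=> Hi Hk Heq; apply/eqP; apply/negP => /negP Hne.
move: distinct_check => /allP /(_ i); rewrite mem_iota Hi => /(_ isT).
move=> /allP /(_ k); rewrite mem_iota Hk Hne => /(_ isT) /hasP [n].
rewrite mem_iota /= => Hn.
have := @memEL i (inord n) Hi; have := @memEL k (inord n) Hk.
by rewrite Heq /= inordK // => -> ->; rewrite eqxx.
Qed.

Definition hasK i j y := has (fun k => (k != i) && (k != j) && (y \in nth [::] EN k)) (iota 0 9).

Lemma key_check : all (fun i => all (fun j => (i != j) ==> all (fun y => all (fun y' =>
   hasK i j y ==> hasK i j y' ==>
   all (fun k => ((k != i) && (k != j)) ==> ((y \in nth [::] EN k) == (y' \in nth [::] EN k))) (iota 0 9)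
   ==> (y == y')) (iota 0 10)) (iota 0 10)) (iota 0 9)) (iota 0 9).
Proof. by vm_compute. Qed.

Lemma inE_ef e f x : (x \in E_ef e f) = [&& x != e, x != f & x \in EH].
Proof. by rewrite /E_ef !inE negb_or andbA. Qed.

Lemma V_hasK e f i j (y : Vtx) : e = nth set0 EL i -> f = nth set0 EL j ->
  y \in V_ef e f -> hasK i j (val y).
Proof.
move=> -> -> /bigcupP [x]; rewrite inE_ef => /and3P [ne nf /EH_ex [k Hk Ex]] Hy; subst x.
apply/hasP; exists k; first by rewrite mem_iota.
rewrite -memEL // Hy andbT; apply/andP; split.
  by apply/negP => /eqP E; subst; rewrite eqxx in ne.
by apply/negP => /eqP E; subst; rewrite eqxx in nf.
Qed.

Lemma key e f y y' : e \in EH -> f \in EH -> e != f ->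
  y \in V_ef e f -> y' \in V_ef e f ->
  (forall x, x \in E_ef e f -> (y \in x) = (y' \in x)) -> y = y'.
Proof.
move=> /EH_ex [i Hi Ei] /EH_ex [j Hj Ej] nef Hy Hy' Hx.
have Hij : i != j by apply/negP => /eqP E; move: nef; rewrite Ei Ej E eqxx.
have := @V_hasK e f i j y Ei Ej Hy; have := @V_hasK e f i j y' Ei Ej Hy'.
move: key_check => /allP /(_ i); rewrite mem_iota Hi => /(_ isT).
move=> /allP /(_ j); rewrite mem_iota Hj Hij => /(_ isT).
move=> /allP /(_ (val y)); rewrite mem_iota ltn_ord => /(_ isT).
move=> /allP /(_ (val y')); rewrite mem_iota ltn_ord => /(_ isT).
move=> H h' h; move: H; rewrite h h' !implyTb => /implyP H.
apply: val_inj; apply/eqP; apply: H; apply/allP => k; rewrite mem_iota /= => Hk.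
apply/implyP => /andP [ki kj]; rewrite -!memEL //; apply/eqP; apply: Hx.
rewrite inE_ef EL_EH // andbT Ei Ej; apply/andP; split.
  by apply/negP => /eqP /EL_inj; move=> E; move: ki; rewrite E // eqxx.
by apply/negP => /eqP /EL_inj; move=> E; move: kj; rewrite E // eqxx.
Qed.

Theorem lemma4p4 (e f : {set Vtx}) (phi : Vtx -> Vtx) :
  e \in EH -> f \in EH -> e != f ->
  monomorphism e f phi ->
  (forall x, x \in E_ef e f -> phi @: x = x) ->
  {in V_ef e f, forall y, phi y = y}.
Proof.
move=> He Hf nef [inj _] Hfix y Hy.
have mem1 x : x \in E_ef e f -> y \in x -> phi y \in x.
  by move=> Hx yx; rewrite -(Hfix x Hx); apply: imset_f.
have Hpy : phi y \in V_ef e f.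
  move: Hy; rewrite /V_ef => /bigcupP [x Hx yx].
  by apply/bigcupP; exists x => //; apply: mem1.
have K := @key e f (phi y) y He Hf nef Hpy Hy. apply: K => x Hx.
apply/idP/idP; last exact: mem1.
move=> px; apply/negPn/negP => ny.
move: px; rewrite -(Hfix x Hx) => /imsetP [w wx eq].
have wV : w \in V_ef e f by apply/bigcupP; exists x.
by move: ny; rewrite (inj _ _ Hy wV eq) wx.
Qed.
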